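(* Let $m\ge2$ and let $\mathbb{A}=(a_{i_1i_2\ldots i_m})$ be a nonnegative strongly primitive tensor of order $m$ and dimension $n$. Then for every $\alpha\in[n]^{m-1}$ there exists $i\in[n]$ such that $a_{i\alpha}>0$.
   Context: General product of dimension-$n$ tensors: for $\mathbb{A}$ of order $m\ge2$ and $\mathbb{B}$ of order $k\ge1$, $(\mathbb{A}\mathbb{B})_{i\alpha_1\ldots\alpha_{m-1}}=\sum_{i_2,\ldots,i_m=1}^n a_{ii_2\ldots i_m}b_{i_2\alpha_1}\cdots b_{i_m\alpha_{m-1}}$ ($i\in[n]$, $\alpha_l\in[n]^{k-1}$), a tensor of order $(m-1)(k-1)+1$; it is associative and $\mathbb{A}^k$ denotes the $k$-fold power (of order $(m-1)^k+1$). A nonnegative tensor $\mathbb{A}$ is strongly primitive if there is a positive integer $k$ such that all entries of $\mathbb{A}^k$ are positive. *)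

(* Defs.v *)
From HB Require Import structures.
From mathcomp Require Import all_boot all_order all_algebra.
Set Implicit Arguments. Unset Strict Implicit. Unset Printing Implicit Defensive.
Import Order.TTheory GRing.Theory Num.Theory.
Local Open Scope ring_scope.

(* A tensor of dimension n is represented by its entry function on index
   sequences; a tensor "of order p" is one whose entries are only ever read
   on sequences of length p (entries at other lengths are irrelevant junk). *)
Definition tensor (R : Type) (n : nat) := seq 'I_n -> R.

(* General product (A B) of an order-m tensor A with an order-k tensor B:
   (A B)_{i alpha_1 ... alpha_{m-1}} =
      sum_{i_2..i_m} a_{i i_2 .. i_m} b_{i_2 alpha_1} ... b_{i_m alpha_{m-1}},
   where each alpha_l is a block of length k-1 of the index sequence. *)
Definition tprod (R : realFieldType) (n m k : nat) (A B : tensor R n)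
  : tensor R n :=
  fun s => match s with
  | [::] => 0
  | i :: beta =>
      \sum_(t : (m.-1).-tuple 'I_n)
         A (i :: val t) *
         \prod_(l < m.-1) B (tnth t l :: take k.-1 (drop (l * k.-1) beta))
  end.

(* tpow m A j = A^(j+1), a tensor of order (m-1)^(j+1) + 1,
   computed as A^(j+2) = A (A^(j+1)) (the product is associative). *)
Fixpoint tpow (R : realFieldType) (n m : nat) (A : tensor R n) (j : nat)
  : tensor R n :=
  match j with
  | 0 => A
  | j'.+1 => tprod m ((m.-1) ^ j'.+1 + 1) A (tpow m A j')
  end.

(* A^k for k >= 1 *)
Definition tpower (R : realFieldType) (n m : nat) (A : tensor R n) (k : nat)
  : tensor R n := tpow m A k.-1.

Definition tensor_nonneg (R : realFieldType) (n m : nat) (A : tensor R n) :=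
  forall t : m.-tuple 'I_n, 0 <= A (val t).

Definition strongly_primitive (R : realFieldType) (n m : nat) (A : tensor R n) :=
  exists k : nat, (0 < k)%N /\
    forall t : ((m.-1) ^ k + 1).-tuple 'I_n, 0 < tpower m A k (val t).

(* Main.v *)
Require Import Defs.
From HB Require Import structures.
From mathcomp Require Import all_boot all_order all_algebra.
Import Order.TTheory GRing.Theory Num.Theory.
Local Open Scope ring_scope.
Lemma take_drop_rep (T : Type) (g : seq T) c l :
  (l < c)%N -> take (size g) (drop (l * size g) (flatten (nseq c g))) = g.
Proof.
elim: l c => [|l IH] [|c] //= H.
  by rewrite mul0n drop0 take_size_cat.
by rewrite mulSn addnC -drop_drop drop_size_cat // IH.
Qed.

Lemma zero_col (R : realFieldType) (n m : nat) (A : tensor R n) (g : seq 'I_n) :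
  (2 <= m)%N -> size g = m.-1 :> nat -> (forall i, A (i :: g) = 0) ->
  forall j, exists g' : seq 'I_n, (size g' = (m.-1) ^ j.+1)%N /\
     forall i, tpow m A j (i :: g') = 0.
Proof.
move=> Hm Hg H0; elim=> [|j [g' [Hs Hz]]]; first by exists g; rewrite expn1.
exists (flatten (nseq m.-1 g')); split.
  rewrite size_flatten /shape map_nseq.
  by rewrite sumn_nseq Hs -expnSr.
move=> i /=.
apply: big1 => t _.
have Hm1 : (0 < m.-1)%N by rewrite -subn1 subn_gt0.
rewrite (bigD1 (Ordinal Hm1)) //= addn1 -pred_Sn -Hs take_drop_rep //.
by rewrite Hz mul0r mulr0.
Qed.

Theorem proposition4p14 (R : realFieldType) (n m : nat) (A : tensor R n) :
  (2 <= m)%N ->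
  tensor_nonneg m A ->
  strongly_primitive m A ->
  forall alpha : (m.-1).-tuple 'I_n, exists i : 'I_n, 0 < A (i :: val alpha).
Proof.
move=> Hm Hnn [k [Hk Hpos]] alpha.
case: (boolP [exists i, 0 < A (i :: val alpha)]) => [/existsP //| /existsPn Hno]; exfalso.
have H0 : forall i, A (i :: val alpha) = 0.
  move=> i; have Hs : size (i :: val alpha) == m :> nat.
    by rewrite /= size_tuple; case: m Hm {Hnn Hpos alpha Hno}.
  have := Hnn (Tuple Hs) => /= Hge.
  apply/eqP; rewrite eq_le Hge andbT leNgt; exact: Hno.
have [g' [Hs Hz]] := @zero_col R n m A (val alpha) Hm (size_tuple alpha) H0 k.-1.
rewrite prednK // in Hs.
case: g' Hs Hz => [|x g'] Hs Hz.
  by have := @expn_gt0 m.-1 k; rewrite -Hs -subn1 subn_gt0 Hm.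
have Hsz : size (x :: x :: g') == ((m.-1) ^ k + 1)%N by rewrite /= -Hs addn1.
have := Hpos (Tuple Hsz); rewrite /tpower /= Hz ltxx //.
Qed.
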